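(* Let $c$ be a positive integer, $\langle H,M,T\rangle$ an abduction instance with $H=\{h_1,\ldots,h_{|H|}\}$, $r=|Var(T)\setminus H|$ with the variables of $T$ outside $H$ named $x_1,\ldots,x_r$, and \[g_c(\langle H,M,T\rangle)=\langle H\cup\{h_{|H|+1},\ldots,h_c\},\,M,\,T\cup\{x_{r+1}\vee\neg x_{r+1},\ldots,x_c\vee\neg x_c\}\rangle\] with fresh variables $h_{|H|+1},\ldots,h_c,x_{r+1},\ldots,x_c$. If $\preceq$ is an irredundant ordering, then $SOL_\preceq(g_c(\langle H,M,T\rangle))=SOL_\preceq(\langle H,M,T\rangle)$.
   Context: An abduction instance is a triple $\langle H,M,T\rangle$ where $T$ is a propositional theory in 3CNF, $H$ a set of propositional variables, $M$ a set of propositional variables. $SOL(H,M,T)=\{H'\subseteq H\mid H'\cup T\text{ consistent and } H'\cup T\models M\}$. An ordering $\preceq$ is a well-founded preorder on sets of variables; $SOL_\preceq(H,M,T)$ is the set of $H'\in SOL(H,M,T)$ such that no $H''\in SOL(H,M,T)$ satisfies $H''\prec H'$. The ordering is irredundant if $H'\subset H''$ implies $H'\prec H''$. $Var(T)$ is the set of variables occurring in $T$. *)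

(* Defs.v *)
From HB Require Import structures.
From mathcomp Require Import all_boot.
From mathcomp Require Import finmap.
Set Implicit Arguments. Unset Strict Implicit. Unset Printing Implicit Defensive.
Local Open Scope fset_scope.

(* Propositional logic over variables of a choiceType V.
   A literal is (x, b): positive literal x if b = true, negative literal ~x if b = false. *)
Definition lit (V : Type) := (V * bool)%type.
Definition clause (V : Type) := seq (lit V).
Definition theory (V : Type) := seq (clause V).

Section Logic.
Variable V : choiceType.

Definition is3CNF (T : theory V) : bool := all (fun C => size C <= 3) T.

Definition vars (T : theory V) : {fset V} :=
  [fset x | x in flatten [seq [seq l.1 | l <- C] | C <- T]].

Definition lit_sat (a : V -> bool) (l : lit V) : bool := a l.1 == l.2.
Definition clause_sat (a : V -> bool) (C : clause V) : bool := has (lit_sat a) C.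
Definition theory_sat (a : V -> bool) (T : theory V) : bool := all (clause_sat a) T.

(* the set of variables S, read as a set of positive atoms, holds under a *)
Definition atoms_sat (a : V -> bool) (S : {fset V}) : Prop := forall x, x \in S -> a x.

Definition consistent (H' : {fset V}) (T : theory V) : Prop :=
  exists a, atoms_sat a H' /\ theory_sat a T.

Definition entails (H' : {fset V}) (T : theory V) (M : {fset V}) : Prop :=
  forall a, atoms_sat a H' -> theory_sat a T -> atoms_sat a M.

Definition SOL (H M : {fset V}) (T : theory V) (H' : {fset V}) : Prop :=
  H' `<=` H /\ consistent H' T /\ entails H' T M.

Definition strict (le : {fset V} -> {fset V} -> Prop) (A B : {fset V}) : Prop :=
  le A B /\ ~ le B A.

Definition ordering (le : {fset V} -> {fset V} -> Prop) : Prop :=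
  (forall A, le A A) /\
  (forall A B C, le A B -> le B C -> le A C) /\
  well_founded (strict le).

Definition irredundant (le : {fset V} -> {fset V} -> Prop) : Prop :=
  forall A B : {fset V}, A `<` B -> strict le A B.

Definition SOL_pref (le : {fset V} -> {fset V} -> Prop)
    (H M : {fset V}) (T : theory V) (H' : {fset V}) : Prop :=
  SOL H M T H' /\ ~ (exists H'', SOL H M T H'' /\ strict le H'' H').

(* padding g_c, with the fresh hypothesis variables hs = h_{|H|+1..c}
   and fresh theory variables xs = x_{r+1..c} *)
Definition pad_hyps (H : {fset V}) (hs : seq V) : {fset V} :=
  H `|` [fset h | h in hs].
Definition pad_theory (T : theory V) (xs : seq V) : theory V :=
  T ++ [seq [:: (x, true); (x, false)] | x <- xs].

End Logic.

(* Main.v *)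
Require Import Defs.
From HB Require Import structures.
From mathcomp Require Import all_boot.
From mathcomp Require Import finmap.
Local Open Scope fset_scope.

Section Aux.
Variable V : choiceType.
Implicit Types (a b : V -> bool).

Lemma pad_sat (a : V -> bool) (T : theory V) xs :
  theory_sat a (pad_theory T xs) = theory_sat a T.
Proof.
rewrite /theory_sat /pad_theory all_cat.
have -> : all (clause_sat a) [seq [:: (x, true); (x, false)] | x <- xs] = true.
  apply/allP => C /mapP [x _ ->]; rewrite /clause_sat /= /lit_sat /=.
  by case: (a x).
by rewrite andbT.
Qed.

Lemma sat_agree {a b : V -> bool} {T : theory V} :
  (forall v, v \in vars T -> a v = b v) -> theory_sat a T = theory_sat b T.
Proof.
move=> E; rewrite /theory_sat; apply: eq_in_all => C CT.
rewrite /clause_sat; apply: eq_in_has => l lC.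
rewrite /lit_sat E //.
rewrite /vars; apply/imfsetP; exists l.1 => //=.
apply/flattenP; exists [seq l0.1 | l0 <- C]; first by apply: map_f.
by apply: map_f.
Qed.

Lemma le_sub (le : {fset V} -> {fset V} -> Prop) A B :
  ordering le -> irredundant le -> A `<=` B -> le A B.
Proof.
move=> [refl _] irr sub.
case: (eqVneq A B) => [-> //|ne].
by case: (irr A B); rewrite // fproperEneq ne sub.
Qed.

Lemma sol_up (H M : {fset V}) T hs xs K :
  SOL H M T K -> SOL (pad_hyps H hs) M (pad_theory T xs) K.
Proof.
move=> [sub [[a [Ha Ta]] ent]]; split.
  by apply: fsubset_trans sub _; apply: fsubsetUl.
split; first by exists a; rewrite pad_sat.
by move=> b Hb; rewrite pad_sat; apply: ent.
Qed.

Lemma sol_down (H M : {fset V}) T hs xs K :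
  (forall v, v \in hs ++ xs -> [/\ v \notin H, v \notin M & v \notin vars T]) ->
  SOL (pad_hyps H hs) M (pad_theory T xs) K -> SOL H M T (K `&` H).
Proof.
move=> fresh [sub [[a [Ha Ta]] ent]].
have inH : forall v, v \in K -> v \notin H -> v \in hs ++ xs.
  move=> v vK vH; move/fsubsetP: sub => /(_ v vK).
  rewrite /pad_hyps in_fsetU (negbTE vH) /= => /imfsetP [w /= wh ->].
  by rewrite mem_cat wh.
split; first exact: fsubsetIr.
split.
  rewrite pad_sat in Ta; exists a; split => //.
  by move=> x; rewrite in_fsetI => /andP [xK _]; apply: Ha.
move=> b Hb Tb x xM.
pose b' := fun v => if v \in K then true else b v.
have agree : forall v, v \in vars T -> b' v = b v.
  move=> v vT; rewrite /b'; case vK: (v \in K) => //.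
  case vH: (v \in H); first by rewrite Hb // in_fsetI vK vH.
  have := fresh v (inH v vK (negbT vH)); case=> _ _; by rewrite vT.
have := ent b'.
have Hb' : atoms_sat b' K by move=> v vK; rewrite /b' vK.
rewrite pad_sat (sat_agree agree) => /(_ Hb' Tb x xM).
rewrite /b'; case xK: (x \in K) => // _.
case xH: (x \in H); first by rewrite Hb // in_fsetI xK xH.
have := fresh x (inH x xK (negbT xH)); case=> _; by rewrite xM.
Qed.

End Aux.
Arguments sol_up {V H M T hs xs K}.
Arguments sol_down {V H M T hs xs K}.
Arguments le_sub {V le A B}.

Theorem lemma4 (V : choiceType) (c : nat) (H M : {fset V}) (T : theory V)
    (hs xs : seq V) (le : {fset V} -> {fset V} -> Prop) :
  0 < c ->
  is3CNF T ->
  (* h_{|H|+1}, ..., h_c *)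
  size hs = c - #|` H| ->
  (* x_{r+1}, ..., x_c with r = |Var(T) \ H| *)
  size xs = c - #|` (vars T `\` H)| ->
  (* all new variables are pairwise distinct and fresh *)
  uniq (hs ++ xs) ->
  (forall v, v \in hs ++ xs -> [/\ v \notin H, v \notin M & v \notin vars T]) ->
  ordering le -> irredundant le ->
  forall H' : {fset V},
    SOL_pref le (pad_hyps H hs) M (pad_theory T xs) H' <-> SOL_pref le H M T H'.
Proof.
move=> _ _ _ _ _ fresh ord irr H'.
have [refl [trans _]] := ord.
split.
- move=> [S nmin].
  have SD := sol_down fresh S.
  have eqD : H' `&` H = H'.
    case: (eqVneq (H' `&` H) H') => // ne; exfalso; apply: nmin.
    exists (H' `&` H); split; first exact: sol_up.
    by apply: irr; rewrite fproperEneq ne fsubsetIl.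
  rewrite eqD in SD; split => // -[K [SK sK]]; apply: nmin.
  by exists K; split => //; apply: sol_up.
- move=> [S nmin]; split; first exact: sol_up.
  move=> [K [SK [leK nle]]]; apply: nmin.
  exists (K `&` H); split; first exact: sol_down SK.
  have l1 : le (K `&` H) K by apply: le_sub => //; apply: fsubsetIl.
  split; first exact: trans l1 leK.
  by move=> l2; apply: nle; apply: trans l2 l1.
Qed.
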